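(* Let $f:\mathbb{N}\to\{z\in\mathbb{C}:|z|\le1\}$ be a multiplicative function and $g:=1\ast f$. Then for any $x\ge1$ and $w\ge1$, $$\tilde M_g(x)-\tilde M_g(x/w)\ll\log(2w).$$
   Context: $(1\ast f)(n)=\sum_{d\mid n}f(d)$; $\tilde M_g(y):=\frac1y\sum_{n\le y}g(n)$. The implied constant is absolute. *)

(* Defs.v *)
From Stdlib Require Import Reals Arith List ZArith.
From Coquelicot Require Import Coquelicot.
Import ListNotations.
Open Scope R_scope.

Definition csum_1_to (N : nat) (F : nat -> C) : C :=
  fold_right Cplus (RtoC 0) (map F (seq 1 N)).

Definition multiplicative (f : nat -> C) : Prop :=
  f 1%nat = RtoC 1 /\
  forall m n : nat, (1 <= m)%nat -> (1 <= n)%nat -> Nat.gcd m n = 1%nat ->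
    f (m * n)%nat = Cmult (f m) (f n).

Definition one_conv (f : nat -> C) (n : nat) : C :=
  fold_right Cplus (RtoC 0)
    (map f (filter (fun d => Nat.eqb (n mod d) 0) (seq 1 n))).

(* floor of a real, truncated to nat (0 for y < 1). *)
Definition nfloor (y : R) : nat := Z.to_nat (Int_part y).

Definition Mtilde (g : nat -> C) (y : R) : C :=
  Cmult (RtoC (/ y)) (csum_1_to (nfloor y) g).

(* Main.v *)
Require Import Defs.
From Stdlib Require Import Reals Arith List ZArith.
From Coquelicot Require Import Coquelicot.
From Stdlib Require Import Lra Lia.
Import ListNotations.
Open Scope R_scope.

Fixpoint Csum (n : nat) (F : nat -> C) : C :=
  match n with O => RtoC 0 | S m => Cplus (Csum m F) (F (S m)) end.
Fixpoint Rsum (n : nat) (F : nat -> R) : R :=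
  match n with O => 0 | S m => Rsum m F + F (S m) end.

Lemma fold_map_app (F : nat -> C) l a :
  fold_right Cplus (RtoC 0) (map F (l ++ [a])) =
  Cplus (fold_right Cplus (RtoC 0) (map F l)) (F a).
Proof.
  induction l as [|b l IH]; simpl.
  - ring.
  - rewrite IH. ring.
Qed.

Lemma csum_Csum N F : csum_1_to N F = Csum N F.
Proof.
  unfold csum_1_to. induction N as [|N IH]; [reflexivity|].
  rewrite seq_S, fold_map_app, IH. simpl. reflexivity.
Qed.

Lemma Csum_ext n F G : (forall d, (1 <= d <= n)%nat -> F d = G d) -> Csum n F = Csum n G.
Proof.
  induction n as [|n IH]; intros H; simpl; [reflexivity|].
  rewrite IH by (intros; apply H; lia). rewrite (H (S n)) by lia. reflexivity.
Qed.

Lemma Rsum_le n F G : (forall d, (1 <= d <= n)%nat -> F d <= G d) -> Rsum n F <= Rsum n G.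
Proof.
  induction n as [|n IH]; intros H; simpl; [lra|].
  pose proof (IH (fun d Hd => H d ltac:(lia))). pose proof (H (S n) ltac:(lia)). lra.
Qed.

Lemma Csum_plus n F G : Csum n (fun d => Cplus (F d) (G d)) = Cplus (Csum n F) (Csum n G).
Proof. induction n; simpl; [ring|]. rewrite IHn. ring. Qed.

Lemma Csum_minus n F G : Csum n (fun d => Cminus (F d) (G d)) = Cminus (Csum n F) (Csum n G).
Proof. induction n; simpl; [ring|]. rewrite IHn. ring. Qed.

Lemma Csum_scal n c F : Csum n (fun d => Cmult c (F d)) = Cmult c (Csum n F).
Proof. induction n; simpl; [ring|]. rewrite IHn. ring. Qed.

Lemma Csum_mod n F : Cmod (Csum n F) <= Rsum n (fun d => Cmod (F d)).
Proof.
  induction n; simpl.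
  - rewrite Cmod_0. lra.
  - eapply Rle_trans; [apply Cmod_triangle|]. lra.
Qed.

Lemma fold_filter (F : nat -> C) (p : nat -> bool) l :
  fold_right Cplus (RtoC 0) (map F (filter p l)) =
  fold_right Cplus (RtoC 0) (map (fun d => if p d then F d else RtoC 0) l).
Proof.
  induction l as [|a l IH]; simpl; [reflexivity|].
  destruct (p a); simpl; rewrite IH; [reflexivity| ring].
Qed.

Lemma one_conv_Csum f n :
  one_conv f n = Csum n (fun d => if Nat.eqb (n mod d) 0 then f d else RtoC 0).
Proof.
  unfold one_conv. rewrite fold_filter. rewrite <- csum_Csum. reflexivity.
Qed.

Lemma div_succ N d : (1 <= d)%nat ->
  (S N / d = N / d + (if Nat.eqb (S N mod d) 0 then 1 else 0))%nat.
Proof.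
  intros Hd.
  pose proof (Nat.div_mod (S N) d ltac:(lia)).
  pose proof (Nat.div_mod N d ltac:(lia)).
  pose proof (Nat.mod_upper_bound (S N) d ltac:(lia)).
  pose proof (Nat.mod_upper_bound N d ltac:(lia)).
  destruct (Nat.eqb_spec (S N mod d) 0).
  - nia.
  - nia.
Qed.

Lemma Csum_S n F : Csum (S n) F = Cplus (Csum n F) (F (S n)).
Proof. reflexivity. Qed.

Lemma swap f N :
  csum_1_to N (one_conv f) = Csum N (fun d => Cmult (f d) (RtoC (INR (N / d)))).
Proof.
  rewrite csum_Csum. induction N as [|N IH]; [reflexivity|].
  rewrite Csum_S, IH, one_conv_Csum.
  rewrite (Csum_ext (S N) (fun d => Cmult (f d) (RtoC (INR (S N / d)))) (fun d => Cplus (Cmult (f d) (RtoC (INR (N / d))))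
       (if Nat.eqb (S N mod d) 0 then f d else RtoC 0))).
  - rewrite Csum_plus, (Csum_S N (fun d => Cmult (f d) (RtoC (INR (N / d))))).
    rewrite (Nat.div_small N (S N)) by lia. simpl INR. ring.
  - intros d Hd. rewrite div_succ by lia. rewrite plus_INR.
    destruct (Nat.eqb (S N mod d) 0); simpl INR; rewrite RtoC_plus; ring.
Qed.

Lemma ln_le' a b : 0 < a -> a <= b -> ln a <= ln b.
Proof.
  intros Ha Hab. destruct (Rle_lt_or_eq_dec a b Hab) as [H|H].
  - left. apply ln_increasing; auto.
  - subst; lra.
Qed.

Lemma harm_step n : (1 <= n)%nat -> / INR (S n) <= ln (INR (S n)) - ln (INR n).
Proof.
  intros Hn. assert (Hn' : 1 <= INR n) by (apply (le_INR 1); lia).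
  rewrite S_INR.
  pose proof (exp_ineq1_le (- / (INR n + 1))) as H.
  assert (Heq : 1 + - / (INR n + 1) = INR n * / (INR n + 1)) by (field; lra).
  rewrite Heq in H.
  apply ln_le' in H.
  2: { apply Rmult_lt_0_compat; [lra| apply Rinv_0_lt_compat; lra]. }
  rewrite ln_exp, ln_mult, ln_Rinv in H by (try apply Rinv_0_lt_compat; lra).
  lra.
Qed.

Definition h (d : nat) : R := / INR d.

Lemma harm m n : (1 <= m <= n)%nat -> Rsum n h - Rsum m h <= ln (INR n) - ln (INR m).
Proof.
  intros [Hm Hmn]. induction Hmn.
  - lra.
  - simpl Rsum. pose proof (harm_step m0 ltac:(lia)). unfold h at 2. lra.
Qed.

Lemma nfloor_spec y : 0 <= y -> INR (Defs.nfloor y) <= y < INR (Defs.nfloor y) + 1.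
Proof.
  intros Hy. unfold Defs.nfloor. destruct (base_Int_part y) as [H1 H2].
  assert (H0 : (0 <= Int_part y)%Z).
  { apply le_IZR. assert (IZR (Int_part y) > -1) by lra.
    destruct (Z_lt_le_dec (Int_part y) 0) as [Hl|Hl]; [|apply IZR_le; auto].
    exfalso. apply Z.lt_le_pred in Hl. apply IZR_le in Hl. simpl in Hl. lra. }
  rewrite INR_IZR_INZ, Z2Nat.id by auto. lra.
Qed.

Definition bb (M : nat) (c : R) (d : nat) : R := if Nat.leb d M then c else / INR d.

Lemma Rsum_bb_low M c n : (n <= M)%nat -> Rsum n (bb M c) = INR n * c.
Proof.
  induction n; intros H; simpl Rsum; [simpl; lra|].
  rewrite IHn by lia. unfold bb. rewrite (proj2 (Nat.leb_le _ _)) by lia.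
  rewrite S_INR. lra.
Qed.

Lemma Rsum_bb M c n : (M <= n)%nat -> Rsum n (bb M c) = INR M * c + (Rsum n h - Rsum M h).
Proof.
  induction n; intros H.
  - assert (M = 0%nat) by lia. subst. simpl. lra.
  - destruct (Nat.eq_dec M (S n)) as [E|E].
    + subst. rewrite Rsum_bb_low by lia. lra.
    + simpl Rsum. rewrite IHn by lia. unfold bb.
      rewrite (proj2 (Nat.leb_gt _ _)) by lia. unfold h. lra.
Qed.

Lemma Csum_extend M N F : (M <= N)%nat -> (forall d, (M < d <= N)%nat -> F d = RtoC 0) ->
  Csum M F = Csum N F.
Proof.
  intros H. induction H; intros HF; [reflexivity|].
  rewrite Csum_S, <- IHle by (intros; apply HF; lia). rewrite HF by lia. ring.
Qed.

Lemma term_bound (x w : R) (N M d : nat) :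
  1 <= x -> 1 <= w -> INR N <= x < INR N + 1 -> INR M <= x / w < INR M + 1 ->
  (1 <= d)%nat ->
  Rabs (INR (N / d) / x - w * INR (M / d) / x) <= bb M (w / x) d.
Proof.
  intros Hx Hw [HN1 HN2] [HM1 HM2] Hd.
  assert (Hd' : 1 <= INR d) by (apply (le_INR 1); lia).
  pose proof (Nat.div_mod N d ltac:(lia)).
  pose proof (Nat.mod_upper_bound N d ltac:(lia)).
  pose proof (Nat.div_mod M d ltac:(lia)).
  pose proof (Nat.mod_upper_bound M d ltac:(lia)).
  set (q := (N / d)%nat) in *. set (p := (M / d)%nat) in *.
  assert (Hq1 : INR q * INR d <= INR N).
  { rewrite <- mult_INR. apply le_INR. nia. }
  assert (Hq2 : INR N + 1 <= (INR q + 1) * INR d).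
  { rewrite <- S_INR, <- S_INR, <- mult_INR. apply le_INR. nia. }
  assert (Hp1 : INR p * INR d <= INR M).
  { rewrite <- mult_INR. apply le_INR. nia. }
  assert (Hp2 : INR M + 1 <= (INR p + 1) * INR d).
  { rewrite <- S_INR, <- S_INR, <- mult_INR. apply le_INR. nia. }
  assert (HMw : INR M * w <= x) by (apply (Rmult_le_compat_r w) in HM1; [|lra];
    unfold Rdiv in HM1; rewrite Rmult_assoc, Rinv_l in HM1; lra).
  assert (HMw2 : x < (INR M + 1) * w) by (apply (Rmult_lt_compat_r w) in HM2; [|lra];
    unfold Rdiv in HM2; rewrite Rmult_assoc, Rinv_l in HM2; lra).
  assert (Hp0 : 0 <= INR p) by apply pos_INR.
  assert (Hq0 : 0 <= INR q) by apply pos_INR.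
  unfold bb. destruct (Nat.leb_spec d M).
  -
    assert (A : INR q < (INR p + 1) * w).
    { apply (Rmult_lt_reg_r (INR d)); [lra|]. nra. }
    assert (B : w * INR p < INR q + 1).
    { apply (Rmult_lt_reg_r (INR d)); [lra|]. nra. }
    apply Rabs_le. split.
    + apply (Rmult_le_reg_r x); [lra|]. field_simplify; try lra.
    + apply (Rmult_le_reg_r x); [lra|]. field_simplify; try lra.
  - assert (Hp00 : p = 0%nat) by (unfold p; apply Nat.div_small; lia).
    rewrite Hp00. simpl INR. rewrite Rmult_0_r, Rdiv_0_l, Rminus_0_r.
    rewrite Rabs_right by (apply Rle_ge; apply Rdiv_le_0_compat; lra).
    apply (Rmult_le_reg_r (x * INR d)); [nra|]. field_simplify; try lra.
Qed.

Theorem lemma4p2 :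
  exists K : R,
    forall f : nat -> C,
      multiplicative f ->
      (forall n : nat, (1 <= n)%nat -> Cmod (f n) <= 1) ->
      forall x w : R, 1 <= x -> 1 <= w ->
        Cmod (Cminus (Mtilde (one_conv f) x) (Mtilde (one_conv f) (x / w)))
          <= K * ln (2 * w).
Proof.
  exists 5. intros f _ Hf x w Hx Hw.
  pose proof (nfloor_spec x ltac:(lra)) as HN.
  assert (Hxw0 : 0 < x / w) by (apply Rdiv_lt_0_compat; lra).
  pose proof (nfloor_spec (x / w) ltac:(lra)) as HM.
  set (N := Defs.nfloor x) in *. set (M := Defs.nfloor (x / w)) in *.
  assert (HxwW : x / w <= x).
  { unfold Rdiv. rewrite <- (Rmult_1_r x) at 2. apply Rmult_le_compat_l; [lra|].
    rewrite <- Rinv_1. apply Rinv_le_contravar; lra. }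
  assert (HMN : (M <= N)%nat).
  { destruct (Nat.le_gt_cases M N) as [|Hl]; auto. exfalso.
    assert (INR (S N) <= INR M) by (apply le_INR; lia). rewrite S_INR in *.
    destruct HN, HM. lra. }
  unfold Mtilde. fold N M. rewrite !swap.
  rewrite (Csum_extend M N (fun d => Cmult (f d) (RtoC (INR (M / d))))); auto.
  2: { intros d Hd. rewrite Nat.div_small by lia. simpl INR. ring. }
  rewrite <- !Csum_scal, <- Csum_minus.
  rewrite (Csum_ext N _ (fun d => Cmult (f d) (RtoC (INR (N / d) / x - w * INR (M / d) / x)))).
  2: { intros d Hd. assert (E : / (x / w) = w * / x) by (field; lra). rewrite E.
       unfold Rdiv. rewrite RtoC_minus, !RtoC_mult. ring. }
  eapply Rle_trans; [apply Csum_mod|].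
  eapply Rle_trans.
  { apply (Rsum_le N _ (bb M (w / x))). intros d Hd.
    rewrite Cmod_mult, Cmod_R.
    eapply Rle_trans; [|apply (term_bound x w N M d); auto; lia].
    rewrite <- (Rmult_1_l (Rabs _)) at 2. apply Rmult_le_compat_r; [apply Rabs_pos|].
    apply Hf; lia. }
  rewrite Rsum_bb by auto.
  assert (T1 : INR M * (w / x) <= 1).
  { apply (Rmult_le_reg_r x); [lra|]. field_simplify; try lra.
    destruct HM as [HM1 _]. apply (Rmult_le_compat_r w) in HM1; [|lra].
    unfold Rdiv in HM1. rewrite Rmult_assoc, Rinv_l in HM1; lra. }
  assert (L2 : / 2 < ln (2 * w)).
  { eapply Rlt_le_trans; [apply ln_lt_2|]. apply ln_le'; lra. }
  assert (HN1 : (1 <= N)%nat).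
  { destruct HN. destruct N; [simpl in *; lra|lia]. }
  assert (HNpos : 0 < INR N) by (apply (lt_INR 0); lia).
  assert (T2 : Rsum N h - Rsum M h <= 1 + ln (2 * w)).
  { destruct M as [|M'] eqn:EM.
    - pose proof (harm 1 N ltac:(lia)). simpl Rsum in *. unfold h at 2 in H. simpl INR in *.
      rewrite ln_1, Rinv_1 in H.
      assert (ln (INR N) <= ln (2 * w)).
      { apply ln_le'; auto. destruct HN, HM. simpl INR in *.
        assert (x < w).
        { apply (Rmult_lt_compat_r w) in H3; [|lra]. unfold Rdiv in H3.
          rewrite Rmult_assoc, Rinv_l in H3; lra. }
        lra. }
      lra.
    - pose proof (harm (S M') N ltac:(lia)) as H.
      assert (HMp : 1 <= INR (S M')) by (apply (le_INR 1); lia).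
      assert (ln (INR N) - ln (INR (S M')) <= ln (2 * w)).
      { assert (E : ln (INR N) - ln (INR (S M')) = ln (INR N * / INR (S M'))).
        { rewrite ln_mult, ln_Rinv; try lra. apply Rinv_0_lt_compat; lra. }
        rewrite E. apply ln_le'.
        { apply Rmult_lt_0_compat; auto. apply Rinv_0_lt_compat; lra. }
        apply (Rmult_le_reg_r (INR (S M'))); [lra|].
        rewrite Rmult_assoc, Rinv_l by lra.
        destruct HN, HM.
        assert (x < (INR (S M') + 1) * w).
        { apply (Rmult_lt_compat_r w) in H3; [|lra]. unfold Rdiv in H3.
          rewrite Rmult_assoc, Rinv_l in H3; lra. }
        nra. }
      lra. }
  lra.
Qed.
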